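(* Let $K$ be the Knaster–Kuratowski fan defined below. Then $K+S^1$ has non-empty interior.
   Context: Let $C=C_{1/3}-\tfrac12\subset[-\tfrac12,\tfrac12]$ be the translate of the middle-third Cantor set $C_{1/3}=\{\tfrac23\sum_{k\ge1}a_k3^{-(k-1)}:a_k\in\{0,1\}\}$. Let $E\subset C$ be the set of points of $C$ which are endpoints of deleted (removed) intervals, and $F=C\setminus E$. For $c\in C$ let $\ell_c=\{(x,cx):x\in[0,1]\}$. Put $K_E=\bigcup_{c\in E}\{(x,y)\in\ell_c:x\in\mathbb{Q}\}$, $K_F=\bigcup_{c\in F}\{(x,y)\in\ell_c:x\notin\mathbb{Q}\}$, and $K=K_E\cup K_F$. $S^1$ is the Euclidean unit circle and $X+Y=\{x+y:x\in X,y\in Y\}$. *)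

(* Defs.v *)
From Stdlib Require Import Reals QArith.
Open Scope R_scope.

(* Partial sums  sum_{k=1}^{n} 2 a_k 3^{-k}  (digits indexed from 0: a 0 = a_1). *)
Fixpoint cantor_psum (a : nat -> bool) (n : nat) : R :=
  match n with
  | O => 0
  | S m => cantor_psum a m + 2 * (if a m then 1 else 0) / 3 ^ (S m)
  end.

Definition C13 (x : R) : Prop :=
  exists a : nat -> bool, Un_cv (cantor_psum a) x.

Definition Cset (c : R) : Prop := C13 (c + 1/2).

(* The intervals deleted at step n+1 of the middle-third construction are
   (s + 3^{-(n+1)}, s + 2*3^{-(n+1)}) with s = cantor_psum a n;
   E = points of C that are endpoints of deleted intervals (translated by -1/2). *)
Definition Eset (c : R) : Prop :=
  Cset c /\
  exists (a : nat -> bool) (n : nat),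
    c + 1/2 = cantor_psum a n + 1 / 3 ^ (S n) \/
    c + 1/2 = cantor_psum a n + 2 / 3 ^ (S n).

Definition Fset (c : R) : Prop := Cset c /\ ~ Eset c.

Definition is_rational (x : R) : Prop := exists q : Q, x = Q2R q.

Definition KE (p : R * R) : Prop :=
  exists c, Eset c /\ 0 <= fst p <= 1 /\ snd p = c * fst p /\ is_rational (fst p).
Definition KF (p : R * R) : Prop :=
  exists c, Fset c /\ 0 <= fst p <= 1 /\ snd p = c * fst p /\ ~ is_rational (fst p).
Definition KK (p : R * R) : Prop := KE p \/ KF p.

Definition S1 (p : R * R) : Prop := fst p ^ 2 + snd p ^ 2 = 1.

Definition msum (X Y : R * R -> Prop) (p : R * R) : Prop :=
  exists u v, X u /\ Y v /\ p = (fst u + fst v, snd u + snd v).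

Definition nonempty_interior (A : R * R -> Prop) : Prop :=
  exists (p : R * R) (r : R), 0 < r /\
    forall q : R * R, (fst q - fst p) ^ 2 + (snd q - snd p) ^ 2 < r ^ 2 -> A q.

(* Main.v *)
Require Import Defs.
From Stdlib Require Import Reals QArith.
From Stdlib Require Import Lra Lia Psatz Cantor.
Open Scope R_scope.

Lemma pow3_pos n : 0 < 3 ^ n.
Proof. apply pow_lt; lra. Qed.

Lemma psum_S a n : cantor_psum a (S n) = cantor_psum a n + 2 * (if a n then 1 else 0) / 3 ^ (S n).
Proof. reflexivity. Qed.

Lemma psum_step a n : cantor_psum a n <= cantor_psum a (S n) <= cantor_psum a n + 2 / 3 ^ (S n).
Proof.
  rewrite psum_S. pose proof (pow3_pos (S n)) as H.
  assert (Ht : 0 < / 3 ^ S n) by (apply Rinv_0_lt_compat; lra).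
  unfold Rdiv. destruct (a n); lra.
Qed.

Lemma psum_tail a n m : cantor_psum a n <= cantor_psum a (n + m) <= cantor_psum a n + 1 / 3 ^ n - 1 / 3 ^ (n + m).
Proof.
  induction m.
  - rewrite Nat.add_0_r. lra.
  - rewrite Nat.add_succ_r. pose proof (psum_step a (n + m)).
    assert (E : 3 ^ S (n + m) = 3 * 3 ^ (n + m)) by reflexivity.
    rewrite E in H. rewrite E.
    pose proof (pow3_pos (n+m)).
    assert (2 / (3 * 3 ^ (n + m)) - 1 / 3 ^ (n+m) = - (1 / (3 * 3 ^ (n + m)))) by (field; lra).
    lra.
Qed.

Lemma psum_bounds a n : 0 <= cantor_psum a n <= 1.
Proof.
  pose proof (psum_tail a 0 n). simpl in H.
  pose proof (pow3_pos n). assert (0 < 1 / 3 ^ n) by (apply Rdiv_lt_0_compat; lra). lra.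
Qed.

Lemma lim_bounds (u : nat -> R) l (N : nat) lo hi :
  Un_cv u l -> (forall k : nat, lo <= u (N + k)%nat <= hi) -> lo <= l <= hi.
Proof.
  intros Hc Hb. split; apply Rnot_lt_le; intro H.
  - destruct (Hc (lo - l)) as [M HM]; [lra|].
    specialize (HM (N + M)%nat ltac:(lia)). specialize (Hb M). unfold Rdist in HM.
    pose proof (Rle_abs (u (N + M)%nat - l)). lra.
  - destruct (Hc (l - hi)) as [M HM]; [lra|].
    specialize (HM (N + M)%nat ltac:(lia)). specialize (Hb M). unfold Rdist in HM.
    pose proof (Rle_abs (- (u (N + M)%nat - l))). rewrite Rabs_Ropp in H0. lra.
Qed.

Lemma psum_cv a : exists L, Un_cv (cantor_psum a) L.
Proof.
  destruct (growing_cv (cantor_psum a)) as [L HL].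
  - intro n. apply psum_step.
  - exists 1. intros x [i ->]. apply psum_bounds.
  - exists L; exact HL.
Qed.

Lemma lim_near a L n : Un_cv (cantor_psum a) L ->
  cantor_psum a n <= L <= cantor_psum a n + 1 / 3 ^ n.
Proof.
  intro H. apply (lim_bounds (cantor_psum a) L n); auto. intro k. pose proof (psum_tail a n k) as T.
  pose proof (pow3_pos (n+k)). assert (0 < 1 / 3 ^ (n+k)) by (apply Rdiv_lt_0_compat; lra). lra.
Qed.

Lemma psum_triadic a n : exists N : nat, cantor_psum a n = INR N / 3 ^ n.
Proof.
  induction n.
  - exists 0%nat. simpl. field.
  - destruct IHn as [N HN]. exists (3 * N + 2 * (if a n then 1 else 0))%nat.
    rewrite psum_S, HN. pose proof (pow3_pos n).
    rewrite plus_INR, !mult_INR. simpl pow.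
    destruct (a n); simpl INR; field; lra.
Qed.

Definition choose (b : nat -> R) (s : R) (n : nat) : bool :=
  if Rle_dec (b n) (s + 1 / 3 ^ (S n)) then true else false.

Fixpoint SS (b : nat -> R) (n : nat) : R :=
  match n with
  | O => 0
  | S m => SS b m + 2 * (if choose b (SS b m) m then 1 else 0) / 3 ^ (S m)
  end.

Definition dig b n := choose b (SS b n) n.

Lemma psum_dig b n : cantor_psum (dig b) n = SS b n.
Proof. induction n; simpl; [reflexivity|]. rewrite IHn. reflexivity. Qed.

Lemma cantor_avoid (b : nat -> R) :
  exists a L, Un_cv (cantor_psum a) L /\ forall n, L <> b n.
Proof.
  destruct (psum_cv (dig b)) as [L HL]. exists (dig b), L. split; auto.
  intros n Heq. pose proof (lim_near _ _ (S n) HL) as H.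
  rewrite psum_dig in H. change (SS b (S n)) with (SS b n + 2 * (if choose b (SS b n) n then 1 else 0) / 3 ^ (S n)) in H.
  unfold choose in H.
  pose proof (pow3_pos (S n)).
  set (t := 3 ^ S n) in *.
  assert (0 < 1 / t) by (apply Rdiv_lt_0_compat; lra).
  assert (E1 : 2 * 1 / t = 2 * (1 / t)) by (field; lra).
  assert (E0 : 2 * 0 / t = 0) by (field; lra).
  destruct (Rle_dec (b n) (SS b n + 1 / t)); [rewrite E1 in H | rewrite E0 in H]; lra.
Qed.

Definition qdec (j k l : nat) : R := Q2R (Qmake (Z.of_nat j - Z.of_nat k) (Pos.of_nat l)).

Definition bad (p1 p2 : R) (n : nat) : R :=
  let '(i, r) := Cantor.of_nat n in
  let '(j, r2) := Cantor.of_nat r in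
  let '(k, l) := Cantor.of_nat r2 in
  match i with
  | O => INR j / 3 ^ k
  | S O => (p2 + sqrt (1 - (qdec j k l - p1)^2)) / qdec j k l + 1/2
  | _ => (p2 - sqrt (1 - (qdec j k l - p1)^2)) / qdec j k l + 1/2
  end.

Lemma bad_idx p1 p2 i j k l :
  bad p1 p2 (Cantor.to_nat (i, Cantor.to_nat (j, Cantor.to_nat (k, l)))) =
  match i with
  | O => INR j / 3 ^ k
  | S O => (p2 + sqrt (1 - (qdec j k l - p1)^2)) / qdec j k l + 1/2
  | _ => (p2 - sqrt (1 - (qdec j k l - p1)^2)) / qdec j k l + 1/2
  end.
Proof. unfold bad. rewrite !Cantor.cancel_of_to. reflexivity. Qed.

Lemma q_dec (q : Q) : exists j k l, Q2R q = qdec j k l.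
Proof.
  destruct q as [z d]. exists (Z.to_nat z), (Z.to_nat (- z)), (Pos.to_nat d).
  unfold qdec. rewrite Pos2Nat.id.
  replace (Z.of_nat (Z.to_nat z) - Z.of_nat (Z.to_nat (- z)))%Z with z by lia.
  reflexivity.
Qed.

Lemma E_triadic c : Eset c -> exists N k : nat, c + 1/2 = INR N / 3 ^ k.
Proof.
  intros [_ [a [n Hn]]]. destruct (psum_triadic a n) as [N HN].
  pose proof (pow3_pos n).
  destruct Hn as [H1|H1]; rewrite HN in H1.
  - exists (3 * N + 1)%nat, (S n). rewrite H1, plus_INR, mult_INR. simpl. field. lra.
  - exists (3 * N + 2)%nat, (S n). rewrite H1, plus_INR, mult_INR. simpl. field. lra.
Qed.

Theorem mainTheorem7 : nonempty_interior (msum KK S1).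
Proof.
  exists (-1/4, 0), (1/8). split; [lra|].
  intros [p1 p2] Hp. simpl in Hp.
  assert (S1' : (p1 + 1/4)^2 < 1/64) by nra.
  assert (S2' : p2^2 < 1/64).
  { pose proof (pow2_ge_0 (p1 + 1/4)). simpl in *. lra. }
  assert (B1 : -3/8 < p1 < -1/8).
  { split; apply Rnot_le_lt; intro; nra. }
  assert (B2 : -1/8 < p2 < 1/8).
  { split; apply Rnot_le_lt; intro; nra. }
  destruct (cantor_avoid (bad p1 p2)) as [a [L [HL Hnb]]].
  assert (LB : 0 <= L <= 1).
  { apply (lim_bounds (cantor_psum a) L 0); auto. intro k; apply psum_bounds. }
  set (c := L - 1/2).
  assert (HC : Cset c). { unfold Cset, C13, c. exists a. replace (L - 1/2 + 1/2) with L by ring. exact HL. }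
  assert (HF : Fset c).
  { split; auto. intro HE. destruct (E_triadic c HE) as [N [k Hk]].
    apply (Hnb (Cantor.to_nat (0%nat, Cantor.to_nat (N, Cantor.to_nat (k, 0%nat))))).
    rewrite bad_idx. unfold c in Hk. rewrite <- Hk. ring. }
  set (A := 1 + c^2). set (B := p1 + c * p2). set (D := p1^2 + p2^2 - 1).
  set (Dl := B^2 - A * D).
  assert (HA : 0 < A) by (unfold A; nra).
  assert (HD : D < 0) by (unfold D; nra).
  assert (HDl : 0 < Dl) by (unfold Dl; nra).
  set (s := sqrt Dl).
  assert (Hs : s * s = Dl) by (apply sqrt_sqrt; lra).
  assert (Hs0 : 0 <= s) by apply sqrt_pos.
  set (x := (B + s) / A).
  assert (HxA : x * A = B + s) by (unfold x; field; lra).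
  assert (HBs : B * B < s * s).
  { rewrite Hs. unfold Dl. assert (0 < A * (- D)) by (apply Rmult_lt_0_compat; lra). nra. }
  assert (Hsb : B < s /\ - B < s) by (split; apply Rnot_le_lt; intro; nra).
  assert (Hc : -1/2 <= c <= 1/2) by (unfold c; lra).
  assert (Hx0 : 0 < x). { unfold x. apply Rdiv_lt_0_compat; lra. }
  assert (Hkey : -D <= A - 2 * B) by (unfold D, A, B; nra).
  assert (Hx1 : x <= 1).
  { assert (s <= A - B) by (unfold Dl in Hs; nra). nra. }
  assert (Hcirc : (x - p1)^2 + (c * x - p2)^2 = 1).
  { assert (A * x^2 - 2 * B * x + D = 0).
    { assert (A * (A * x ^ 2 - 2 * B * x + D) = 0) by (unfold Dl in Hs; nra). nra. }
    unfold A, B, D in H. nra. }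
  exists (x, c * x), (p1 - x, p2 - c * x). split; [|split].
  - right. exists c. simpl. split; auto. split; [lra|]. split; [ring|].
    intros [q Hq]. destruct (q_dec q) as [j [k [l Hjkl]]]. rewrite Hjkl in Hq.
    set (sq := sqrt (1 - (qdec j k l - p1) ^ 2)).
    assert (Hsq : sq * sq = 1 - (qdec j k l - p1) ^ 2).
    { apply sqrt_sqrt. rewrite <- Hq. pose proof (pow2_ge_0 (c * x - p2)). lra. }
    assert (Hsq0 : 0 <= sq) by apply sqrt_pos.
    rewrite <- Hq in Hsq.
    assert (Hm : (c * x - p2 - sq) * (c * x - p2 + sq) = 0) by nra.
    destruct (Rmult_integral _ _ Hm) as [Hm1|Hm1].
    + apply (Hnb (Cantor.to_nat (1%nat, Cantor.to_nat (j, Cantor.to_nat (k, l))))).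
      rewrite bad_idx. fold sq. rewrite <- Hq.
      assert (Hc' : c = (p2 + sq) / x) by (field_simplify_eq; lra).
      rewrite <- Hc'. unfold c. ring.
    + apply (Hnb (Cantor.to_nat (2%nat, Cantor.to_nat (j, Cantor.to_nat (k, l))))).
      rewrite bad_idx. fold sq. rewrite <- Hq.
      assert (Hc' : c = (p2 - sq) / x) by (field_simplify_eq; lra).
      rewrite <- Hc'. unfold c. ring.
  - unfold S1. simpl. nra.
  - simpl. f_equal; ring.
Qed.
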